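(* There is an absolute constant $C$ such that for all positive integers $n$, $\mathrm{sf}(\Lambda(R\cup L))\le 2^{Cn}\, s(\lfloor0.15n\rfloor)^{0.8n}$.
   Context: $R=\{(x,y)\in\mathbb{R}^2:0.7n\le x+y\le n,\ |x-y|\le0.8n\}$, $L=\{(x,y)\in\mathbb{R}^2:2\lceil0.7n\rceil\le x+y\le1.7n,\ |x-y|\le0.4n\}$, $\Lambda(X)=\mathbb{Z}^2\cap X$. $\mathrm{sf}(Y)$ is the number of sum-free subsets of $Y$ (no $a,b,c$, not necessarily distinct, with $a+b=c$, coordinatewise addition). For $m\ge 0$, $s(m)=\mathrm{sf}(\{1,3,4\}\times[m])$ where $[m]=\{1,\dots,m\}$, viewed as a subset of $\mathbb{Z}^2$. *)

(* Defs.v *)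
From Stdlib Require Import Reals.
From mathcomp Require Import all_boot all_algebra.
Set Implicit Arguments. Unset Strict Implicit. Unset Printing Implicit Defensive.
Import GRing.Theory Num.Theory.

Local Open Scope ring_scope.

Definition pt := (int * int)%type.
Definition padd (p q : pt) : pt := (p.1 + q.1, p.2 + q.2).

Definition sumfree (s : seq pt) (A : {set seq_sub s}) : bool :=
  [forall a in A, forall b in A, forall c in A, padd (val a) (val b) != val c].

Definition sf (s : seq pt) : nat := #|[set A : {set seq_sub s} | sumfree A]|.

Definition ceil07 (n : nat) : nat := ((7 * n + 9) %/ 10)%N.

(* membership in R = {0.7n <= x+y <= n, |x-y| <= 0.8n}, cleared of denominators *)
Definition inR (n : nat) (p : pt) : bool :=
  [&& (7 * n)%:Z <= 10 * (p.1 + p.2), 10 * (p.1 + p.2) <= (10 * n)%:Z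
    & 10 * `|p.1 - p.2| <= (8 * n)%:Z].

(* membership in L = {2*ceil(0.7n) <= x+y <= 1.7n, |x-y| <= 0.4n} *)
Definition inL (n : nat) (p : pt) : bool :=
  [&& (2 * ceil07 n)%:Z <= p.1 + p.2, 10 * (p.1 + p.2) <= (17 * n)%:Z
    & 10 * `|p.1 - p.2| <= (4 * n)%:Z].

(* The box [-n, 2n]^2 of integer points; it contains R and L
   (R lies in [-0.05n, 0.9n]^2, L lies in [0.15n, 1.05n]^2). *)
Definition box (n : nat) : seq int := [seq k%:Z - n%:Z | k <- iota 0 (3 * n).+1].

Definition LambdaRL (n : nat) : seq pt :=
  [seq p <- [seq (x, y) | x <- box n, y <- box n] | inR n p || inL n p].

Definition s_fun (m : nat) : nat :=
  sf [seq ((i%:Z, j%:Z) : pt) | i <- [:: 1; 3; 4]%N, j <- iota 1 m].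

(* Main.v *)
Require Import Defs.
From Stdlib Require Import Reals Lra.
From mathcomp Require Import all_boot all_algebra zify.
Set Implicit Arguments. Unset Strict Implicit.
Import GRing.Theory Num.Theory.

Section Gen.
Variables (s t : seq pt) (f : pt -> pt).

Definition imF (A : {set seq_sub s}) : {set seq_sub t} :=
  [set y | [exists x in A, val y == f (val x)]].

Lemma memF (A : {set seq_sub s}) (x : seq_sub s) (Hx : f (ssval x) \in t) :
  {in s &, injective f} ->
  (SeqSub Hx \in imF A) = (x \in A).
Proof.
move=> finj; rewrite inE; apply/existsP/idP.
  case=> x' /andP[x'A /eqP /= e].
  have : val x' = val x by apply: finj => //; apply: ssvalP.
  by move/val_inj => <-.
by move=> xA; exists x; rewrite xA /=.
Qed.

Lemma imF_sumfree (A : {set seq_sub s}) :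
  {in s & s, forall a b, forall c, c \in s -> padd (f a) (f b) = f c -> padd a b = c} ->
  sumfree A -> sumfree (imF A).
Proof.
move=> rel /forall_inP sA; apply/forall_inP => a' /[!inE] /existsP[a /andP[aA /eqP ea]].
apply/forall_inP => b' /[!inE] /existsP[b /andP[bA /eqP eb]].
apply/forall_inP => c' /[!inE] /existsP[c /andP[cA /eqP ec]].
rewrite ea eb ec; apply/eqP => e.
have := rel _ _ (ssvalP a) (ssvalP b) _ (ssvalP c) e.
move: (sA a aA) => /forall_inP /(_ b bA) /forall_inP /(_ c cA) /eqP.
by [].
Qed.
End Gen.

Lemma sf_morph (s t : seq pt) (f : pt -> pt) :
  {in s &, injective f} -> {in s, forall x, f x \in t} ->
  {in s & s, forall a b, forall c, c \in s -> padd (f a) (f b) = f c -> padd a b = c} ->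
  (sf s <= sf t)%N.
Proof.
move=> finj fst rel; rewrite /sf.
set Ss := [set A | _]; set St := [set A | _].
rewrite -(card_in_imset (f := @imF s t f)).
  apply: subset_leq_card; apply/subsetP => B /imsetP[A]; rewrite !inE => sA ->.
  exact: imF_sumfree.
move=> A B _ _ eAB; apply/setP => x.
have Hx := fst _ (ssvalP x).
by rewrite -(memF A Hx finj) eAB (memF B Hx finj).
Qed.

Lemma sf_mul (s t1 t2 : seq pt) :
  {subset s <= t1 ++ t2} -> (sf s <= sf t1 * sf t2)%N.
Proof.
move=> sub; rewrite /sf -cardsX.
set Ss := [set A | _].
pose G (A : {set seq_sub s}) := (@imF s t1 id A, @imF s t2 id A).
have idinj : {in s &, injective (@id pt)} by [].
have rel : {in s & s, forall a b, forall c, c \in s -> padd (id a) (id b) = id c -> padd a b = c} by [].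
rewrite -(card_in_imset (f := G)).
  apply: subset_leq_card; apply/subsetP => B /imsetP[A]; rewrite inE => sA ->.
  rewrite in_setX !inE.
  by rewrite !imF_sumfree.
move=> A B _ _ [e1 e2]; apply/setP => x.
have := sub _ (ssvalP x); rewrite mem_cat => /orP[H|H].
  by rewrite -(memF A (f := id) H idinj) e1 (memF B (f := id) H idinj).
by rewrite -(memF A (f := id) H idinj) e2 (memF B (f := id) H idinj).
Qed.

Lemma sf_sub (s t : seq pt) : {subset s <= t} -> (sf s <= sf t)%N.
Proof. by move=> H; apply: (@sf_morph s t id). Qed.

Lemma sf_pow (s : seq pt) : (sf s <= 2 ^ size s)%N.
Proof.
apply: (leq_trans (sf_sub (t := undup s) _)); first by move=> x; rewrite mem_undup.
rewrite /sf; apply: (leq_trans (subset_leq_card (subsetT _))).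
rewrite -powersetT card_powerset cardsT card_seq_sub ?undup_uniq //.
by rewrite leq_exp2l // size_undup.
Qed.

Lemma sf_ge1 (s : seq pt) : (1 <= sf s)%N.
Proof.
rewrite /sf card_gt0; apply/set0Pn; exists set0; rewrite inE.
by apply/forall_inP => a; rewrite inE.
Qed.

Lemma sf_cover (s : seq pt) (ss : seq (seq pt)) :
  {subset s <= flatten ss} -> (sf s <= \prod_(t <- ss) sf t)%N.
Proof.
elim: ss s => [|t ss IH] s sub /=.
  rewrite big_nil; case: s sub => [|x s'] sub.
    by apply: (leq_trans (sf_pow _)).
  by have := sub x (mem_head _ _).
rewrite big_cons; apply: (leq_trans (sf_mul sub)).
by rewrite leq_mul2l IH ?orbT.
Qed.

Lemma prod_bound (ss : seq (seq pt)) (B : nat) :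
  (forall t, t \in ss -> sf t <= B)%N -> (\prod_(t <- ss) sf t <= B ^ size ss)%N.
Proof.
elim: ss => [|t ss IH] H; first by rewrite big_nil.
rewrite big_cons expnS leq_mul ?H ?mem_head // IH // => u u_in.
by apply: H; rewrite inE u_in orbT.
Qed.

Open Scope ring_scope.

Section Fib.
Variable n : nat.
Hypothesis n_gt0 : (0 < n)%N.
Definition vv (p : pt) : int := p.1 - p.2.
Definition Qd (d : int) : int := (((7 * n)%:Z + 10 * d) %/ 20)%Z.
Definition inF (d1 d3 : int) (p : pt) : bool :=
  (inR n p && ((vv p == d1) || (vv p == d3))) || (inL n p && (vv p == d1 + d3)).
Definition fib d1 d3 := [seq p <- LambdaRL n | inF d1 d3 p].
Definition psi (d1 d3 : int) (p : pt) : pt :=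
  if inR n p then (if vv p == d1 then (1, p.1 - Qd d1 + 1) else (3, p.1 - Qd d3 + 1))
  else (4, p.1 - Qd d1 - Qd d3 + 2).

Lemma inLR p : p \in LambdaRL n -> inR n p || inL n p.
Proof. by rewrite mem_filter => /andP[]. Qed.

Lemma fibP d1 d3 p : p \in fib d1 d3 ->
  [\/ [/\ inR n p, vv p = d1 & psi d1 d3 p = (1, p.1 - Qd d1 + 1)],
      [/\ inR n p, vv p = d3 & psi d1 d3 p = (3, p.1 - Qd d3 + 1)] |
      [/\ inL n p, vv p = d1 + d3 & psi d1 d3 p = (4, p.1 - Qd d1 - Qd d3 + 2)]].
Proof.
rewrite mem_filter /inF /psi => /andP[/orP[/andP[-> /orP[/eqP e|/eqP e]]|/andP[hL /eqP e]] _].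
- by constructor 1; rewrite e eqxx.
- case: eqP => e1; first by constructor 1; rewrite -e1.
  by constructor 2.
case: ifP => hR; last by constructor 3.
exfalso; move: n_gt0 hR hL; rewrite /inR /inL /ceil07; case: p {e} => x y /=; lia.
Qed.
End Fib.

Section Fib2.
Variable n : nat.
Hypothesis n_gt0 : (0 < n)%N.

Lemma fib_bound d1 d3 : (sf (fib n d1 d3) <= s_fun (15 * n %/ 100 + 4))%N.
Proof.
apply: (@sf_morph _ _ (psi n d1 d3)).
- move=> [xa ya] [xb yb] /(fibP n_gt0) ha /(fibP n_gt0) hb.
  case: ha => -[_ ha ->]; case: hb => -[_ hb ->]; move=> e; have e1 := congr1 fst e; have e2 := congr1 snd e; rewrite /= in e1 e2;
  move: ha hb; rewrite /vv /= => ha hb; congr pair; lia.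
- move=> [x y] /(fibP n_gt0) h; apply/allpairsP.
  case: h => -[hR hv ->]; move: hR hv; rewrite /inR /inL /ceil07 /vv /= => hR hv.
  + exists (1%N, (absz (x - Qd n d1 + 1))); split => //=;
      rewrite /Qd; first (rewrite mem_iota; lia); congr pair; lia.
  + exists (3%N, (absz (x - Qd n d3 + 1))); split => //=;
      rewrite /Qd; first (rewrite mem_iota; lia); congr pair; lia.
  + exists (4%N, (absz (x - Qd n d1 - Qd n d3 + 2))); split => //=;
      rewrite /Qd; first (rewrite mem_iota; lia); congr pair; lia.
- move=> [xa ya] [xb yb] /(fibP n_gt0) ha /(fibP n_gt0) hb [xc yc] /(fibP n_gt0) hc.
  case: ha => -[_ ha ->]; case: hb => -[_ hb ->]; case: hc => -[_ hc ->];
  rewrite /padd /=; move=> e; have e1 := congr1 fst e; have e2 := congr1 snd e; rewrite /= in e1 e2; move: ha hb hc; rewrite /vv /= => ha hb hc;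
  congr pair; lia.
Qed.
End Fib2.

Lemma s_fun_shift m : (s_fun (m + 4) <= s_fun m * 2 ^ 12)%N.
Proof.
rewrite /s_fun.
set ex := [seq ((i%:Z, j%:Z) : pt) | i <- [:: 1; 3; 4]%N, j <- iota m.+1 4].
apply: (leq_trans (sf_mul (t1 := [seq ((i%:Z, j%:Z) : pt) | i <- [:: 1; 3; 4]%N, j <- iota 1 m]) (t2 := ex) _)).
  move=> p /allpairsP[[i j] [hi hj ->]]; rewrite /= in hi hj.
  rewrite mem_cat; apply/orP; move: hj; rewrite mem_iota => hj.
  case: (leqP j m) => hjm.
    by left; apply/allpairsP; exists (i, j); split; [done | rewrite mem_iota /=; lia | done].
  by right; apply/allpairsP; exists (i, j); split; [done | rewrite mem_iota /=; lia | done].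
by rewrite leq_mul2l (leq_trans (sf_pow _)) ?orbT // size_allpairs.
Qed.

Section Cover.
Variable n : nat.
Hypothesis n_gt0 : (0 < n)%N.
Definition KK := ((4 * n + 9) %/ 10)%N.
Definition fibA (t : nat) := fib n (KK%:Z + t%:Z) (t%:Z - 2 * KK%:Z).
Definition fibB (t : nat) := fib n (t%:Z - KK%:Z) (t%:Z + 1).
Definition fibs := [seq fibA t | t <- iota 0 KK.+1] ++ [seq fibB t | t <- iota 0 KK.+1].

Lemma in1 d1 d3 p : p \in LambdaRL n -> inR n p -> vv p = d1 -> p \in fib n d1 d3.
Proof. by move=> hp hR hv; rewrite mem_filter hp andbT /inF hR hv eqxx. Qed.
Lemma in3 d1 d3 p : p \in LambdaRL n -> inR n p -> vv p = d3 -> p \in fib n d1 d3.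
Proof. by move=> hp hR hv; rewrite mem_filter hp andbT /inF hR hv eqxx orbT. Qed.
Lemma in4 d1 d3 p : p \in LambdaRL n -> inL n p -> vv p = d1 + d3 -> p \in fib n d1 d3.
Proof. by move=> hp hL hv; rewrite mem_filter hp andbT /inF hL hv eqxx orbT. Qed.

Lemma cover : {subset LambdaRL n <= flatten fibs}.
Proof.
move=> p hp; rewrite /fibs flatten_cat mem_cat.
have := inLR hp => /orP[hR|hL].
  have hd : (`|vv p| <= 2 * KK%:Z).
    by move: hR; rewrite /inR /vv /KK; case: p {hp} => x y /=; lia.
  have [h|h] : (KK%:Z <= vv p \/ vv p <= - KK%:Z) \/ (- KK%:Z <= vv p <= 0 \/ 1 <= vv p <= KK%:Z) by lia.
    apply/orP; left; apply/flatten_mapP; case: h => h.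
      exists (absz (vv p - KK%:Z)); first by rewrite mem_iota; lia.
      by apply: in1 => //; lia.
    exists (absz (vv p + 2 * KK%:Z)); first by rewrite mem_iota; lia.
    by apply: in3 => //; lia.
  apply/orP; right; apply/flatten_mapP; case: h => h.
    exists (absz (vv p + KK%:Z)); first by rewrite mem_iota; lia.
    by apply: in1 => //; lia.
  exists (absz (vv p - 1)); first by rewrite mem_iota; lia.
  by apply: in3 => //; lia.
have hd : (`|vv p| <= KK%:Z).
  by move: hL; rewrite /inL /vv /KK; case: p {hp} => x y /=; lia.
have [h|h] : (((vv p + KK%:Z) %% 2)%Z = 0 \/ ((vv p + KK%:Z) %% 2)%Z = 1) by lia.
  apply/orP; left; apply/flatten_mapP.
  exists (absz ((vv p + KK%:Z) %/ 2)%Z); first by rewrite mem_iota; lia.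
  by apply: in4 => //; lia.
apply/orP; right; apply/flatten_mapP.
exists (absz ((vv p + KK%:Z) %/ 2)%Z); first by rewrite mem_iota; lia.
by apply: in4 => //; lia.
Qed.

Lemma nat_bound :
  (sf (LambdaRL n) <= (s_fun (15 * n %/ 100) * 2 ^ 12) ^ (2 * KK.+1))%N.
Proof.
apply: (leq_trans (sf_cover cover)).
have -> : (2 * KK.+1 = size fibs)%N by rewrite size_cat !size_map size_iota; lia.
apply: prod_bound => t; rewrite mem_cat => /orP[] /mapP[u _ ->];
  exact: (leq_trans (fib_bound n_gt0 _ _) (s_fun_shift _)).
Qed.
End Cover.

Close Scope ring_scope.
Open Scope R_scope.

Lemma INR_muln a b : INR (a * b)%N = (INR a * INR b).
Proof. exact: mult_INR. Qed.
Lemma INR_addn a b : INR (a + b)%N = (INR a + INR b).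
Proof. exact: plus_INR. Qed.
Lemma INR_expn a k : INR (a ^ k)%N = (INR a ^ k).
Proof. elim: k => [|k IH] //=; by rewrite expnS INR_muln IH. Qed.
Lemma INR_leq a b : (a <= b)%N -> (INR a <= INR b).
Proof. by move/leP; apply: le_INR. Qed.
Arguments INR_leq {a b}.

Lemma main_R :
  exists C : R, forall n : nat, (0 < n)%N ->
    Rle (INR (sf (LambdaRL n)))
        (Rmult (Rpower 2 (Rmult C (INR n)))
               (Rpower (INR (s_fun ((15 * n) %/ 100)%N)) (Rmult (8 / 10) (INR n)))).
Proof.
exists 100 => n n0.
set m := ((15 * n) %/ 100)%N.
set q := s_fun m.
set N := (2 * (KK n).+1)%N.
have hb := nat_bound n0; rewrite -/m -/q -/N expnMn in hb.
have q1 : (1 <= q)%N by apply: sf_ge1.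
have q2 : (q ^ 4 <= 2 ^ (12 * m))%N.
  have h : (q <= 2 ^ (3 * m))%N.
    rewrite /q /s_fun; apply: (leq_trans (sf_pow _)); by rewrite size_allpairs size_iota.
  have -> : (12 * m = 3 * m * 4)%N by lia.
  by rewrite expnM leq_exp2r.
have hN : (10 * N <= 8 * n + 38)%N by rewrite /N /KK; lia.
have hE : (12 * N + 12 * m <= 100 * n)%N by rewrite /N /m /KK; lia.
have Rq1 : (1 <= INR q) by have := INR_leq q1; simpl.
have Rq0 : (0 < INR q) by lra.
have RN : (10 * INR N <= 8 * INR n + 38).
  have := INR_leq hN; rewrite INR_addn !INR_muln.
  by replace (INR 10) with 10 by (simpl; lra); replace (INR 8) with 8 by (simpl; lra);
     replace (INR 38) with 38 by (simpl; lra).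
have RE : (INR (12 * N + 12 * m) <= 100 * INR n).
  have := INR_leq hE; rewrite INR_muln.
  by replace (INR 100) with 100 by (simpl; lra).
have H1 : (INR (sf (LambdaRL n)) <= INR q ^ N * 2 ^ (12 * N)).
  have := INR_leq hb; rewrite INR_muln !INR_expn.
  have := INR_leq hb; rewrite INR_muln !INR_expn.
  replace (INR 2) with 2 by (simpl; lra).
  by move=> _ h; rewrite -pow_mult in h; exact: h.
have H2 : (INR q ^ N <= Rpower (INR q) (8 / 10 * INR n) * INR q ^ 4).
  rewrite -!Rpower_pow //.
  replace (INR N) with (8 / 10 * INR n + (INR N - 8 / 10 * INR n)) by ring.
  rewrite Rpower_plus; apply: Rmult_le_compat_l; first by apply: Rlt_le; apply: exp_pos.
  apply: Rle_Rpower => //; replace (INR 4) with 4 by (simpl; lra); lra.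
have H3 : (INR q ^ 4 <= 2 ^ (12 * m)).
  have := INR_leq q2; rewrite !INR_expn.
  by replace (INR 2) with 2 by (simpl; lra).
have H4 : (2 ^ (12 * N) * 2 ^ (12 * m) <= Rpower 2 (100 * INR n)).
  rewrite -pow_add -Rpower_pow; last lra.
  by apply: Rle_Rpower; first lra.
have P0 : (0 <= Rpower (INR q) (8 / 10 * INR n)) by apply: Rlt_le; apply: exp_pos.
have P1 : (0 <= 2 ^ (12 * N)) by apply: pow_le; lra.
have P2 : (0 <= INR q ^ N) by apply: pow_le; lra.
apply: (Rle_trans _ _ _ H1).
apply: (Rle_trans _ (Rpower (INR q) (8 / 10 * INR n) * INR q ^ 4 * 2 ^ (12 * N))).
  by apply: Rmult_le_compat_r.
apply: (Rle_trans _ (Rpower (INR q) (8 / 10 * INR n) * (2 ^ (12 * N) * 2 ^ (12 * m)))).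
  rewrite Rmult_assoc (Rmult_comm (INR q ^ 4)) -Rmult_assoc (Rmult_assoc _ (2 ^ (12 * N))).
  apply: Rmult_le_compat_l => //; apply: Rmult_le_compat_l => //.
rewrite Rmult_comm; apply: Rmult_le_compat_r => //.
Qed.

Close Scope R_scope.
Theorem mainTheorem9 :
  exists C : R, forall n : nat, (0 < n)%N ->
    Rle (INR (sf (LambdaRL n)))
        (Rmult (Rpower 2 (Rmult C (INR n)))
               (Rpower (INR (s_fun ((15 * n) %/ 100)%N)) (Rmult (8 / 10) (INR n))))%R.
Proof. exact: main_R. Qed.
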